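(* Let $A_\Gamma$ be a right-angled Artin group. Then the centre $Z(\mathrm{Aut}(A_\Gamma))$ has order at most two. In particular, if $A_\Gamma$ is not free abelian, then $\mathrm{Aut}(A_\Gamma)$ has trivial centre.
   Context: For a finite simplicial graph $\Gamma=(V,E)$, the right-angled Artin group $A_\Gamma$ is the group with presentation $\langle v\in V\mid [v,w]=1 \text{ whenever }(v,w)\in E\rangle$. *)

(* Defs.v *)
(* Right-angled Artin groups presented as words modulo the
   congruence generated by free reduction and the RAAG commutation relations
   (a setoid presentation of the group <V | [v,w]=1 for (v,w) in E>). *)
From Stdlib Require Import Relations.
From mathcomp Require Import all_boot all_order all_algebra.
Set Implicit Arguments. Unset Strict Implicit. Unset Printing Implicit Defensive.
Import GRing.Theory.

Section RAAG.
Variables (T : finType) (e : rel T).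

(* a letter is a generator v (false) or its inverse v^-1 (true) *)
Definition letter := (T * bool)%type.
Definition word := seq letter.

Definition linv (x : letter) : letter := (x.1, ~~ x.2).

Inductive raag_step : word -> word -> Prop :=
| step_free (u w : word) (x : letter) :
    raag_step (u ++ [:: x; linv x] ++ w) (u ++ w)
| step_comm (u w : word) (a b : T) (s t : bool) :
    e a b -> raag_step (u ++ [:: (a, s); (b, t)] ++ w)
                       (u ++ [:: (b, t); (a, s)] ++ w).

Definition raag_eq : word -> word -> Prop := clos_refl_sym_trans word raag_step.

Definition wmul (u v : word) : word := u ++ v.
Definition wone : word := [::].

Definition raag_endo (f : word -> word) : Prop :=
  (forall u v, raag_eq u v -> raag_eq (f u) (f v)) /\
  (forall u v, raag_eq (f (wmul u v)) (wmul (f u) (f v))).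

Definition raag_aut (f : word -> word) : Prop :=
  raag_endo f /\ exists g, raag_endo g /\
    (forall w, raag_eq (g (f w)) w) /\ (forall w, raag_eq (f (g w)) w).

Definition aut_eq (f g : word -> word) : Prop := forall w, raag_eq (f w) (g w).

Definition aut_central (f : word -> word) : Prop :=
  raag_aut f /\ forall g, raag_aut g -> aut_eq (fun w => f (g w)) (fun w => g (f w)).

Definition raag_free_abelian : Prop :=
  exists (n : nat) (phi : word -> {ffun 'I_n -> int}),
    (forall u v, raag_eq u v -> phi u = phi v) /\
    (forall u v, phi (wmul u v) = (phi u + phi v)%R) /\
    (forall u v, phi u = phi v -> raag_eq u v) /\
    (forall z, exists w, phi w = z).
End RAAG.

Definition simplicial_graph (T : finType) (e : rel T) : Prop :=
  symmetric e /\ irreflexive e.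

(* Main.v *)
Require Import Defs.
From Stdlib Require Import Relation_Operators.
From mathcomp Require Import all_boot all_order all_algebra.
From mathcomp Require Import zify ring.
Set Implicit Arguments. Unset Strict Implicit. Unset Printing Implicit Defensive.
Import GRing.Theory Num.Theory.

Section RA.
Variables (T : finType) (e : rel T).
Hypothesis esym : symmetric e.
Hypothesis eirr : irreflexive e.

Local Notation word := (word T).
Local Notation letter := (letter T).
Local Notation req := (raag_eq e).

Lemma req_refl u : req u u. Proof. exact: rst_refl. Qed.
Lemma req_sym u v : req u v -> req v u. Proof. exact: rst_sym. Qed.
Lemma req_trans u v w : req u v -> req v w -> req u w. Proof. exact: rst_trans. Qed.
Lemma req_step u v : raag_step e u v -> req u v. Proof. exact: rst_step. Qed.

Lemma step_ctx p s u v : raag_step e u v -> raag_step e (p ++ u ++ s) (p ++ v ++ s).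
Proof.
case=> [u0 w0 x|u0 w0 a b s0 t0 hab].
  by have h := step_free e (p ++ u0) (w0 ++ s) x; rewrite -!catA /= in h *.
by have h := step_comm (p ++ u0) (w0 ++ s) s0 t0 hab; rewrite -!catA /= in h *.
Qed.

Lemma req_ctx p s u v : req u v -> req (p ++ u ++ s) (p ++ v ++ s).
Proof.
elim=> [a b h|a|a b _ ih|a b c _ ih1 _ ih2].
- by apply: req_step; apply: step_ctx.
- exact: req_refl.
- exact: req_sym.
- exact: req_trans ih1 ih2.
Qed.

Lemma req_catl p u v : req u v -> req (p ++ u) (p ++ v).
Proof. by move=> h; have := req_ctx p [::] h; rewrite !cats0. Qed.
Lemma req_catr s u v : req u v -> req (u ++ s) (v ++ s).
Proof. by move=> h; have := req_ctx [::] s h. Qed.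
Lemma req_cat u u' v v' : req u u' -> req v v' -> req (u ++ v) (u' ++ v').
Proof. by move=> h1 h2; apply: req_trans (req_catr _ h1) (req_catl _ h2). Qed.
Lemma req_cons x u v : req u v -> req (x :: u) (x :: v).
Proof. exact: (req_catl [:: x]). Qed.

Lemma linvK (x : letter) : linv (linv x) = x.
Proof. by case: x => a b; rewrite /linv /= negbK. Qed.

Lemma req_free x : req [:: x; linv x] [::].
Proof. by apply: req_step; have := step_free e [::] [::] x. Qed.
Lemma req_free' x : req [:: linv x; x] [::].
Proof. by have := req_free (linv x); rewrite linvK. Qed.

Definition winv (w : word) : word := rev (map (@linv T) w).
Lemma winv_cat u v : winv (u ++ v) = winv v ++ winv u.
Proof. by rewrite /winv map_cat rev_cat. Qed.
Lemma winv_cons x u : winv (x :: u) = rcons (winv u) (linv x).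
Proof. by rewrite /winv /= rev_cons. Qed.
Lemma winvK u : winv (winv u) = u.
Proof. by rewrite /winv map_rev revK -map_comp (eq_map linvK) map_id. Qed.

Lemma req_winvr u : req (u ++ winv u) [::].
Proof.
elim: u => [|x u ih] /=; first exact: req_refl.
rewrite winv_cons -cats1 catA.
apply: req_trans (_ : req ((x :: u ++ winv u) ++ [:: linv x]) ([:: x] ++ [:: linv x])) _.
  by apply: req_catr; apply: (req_catl [:: x]) ih.
exact: req_free.
Qed.
Lemma req_winvl u : req (winv u ++ u) [::].
Proof. by have := req_winvr (winv u); rewrite winvK. Qed.

Lemma req_cancell p u v : req (p ++ u) (p ++ v) -> req u v.
Proof.
move=> h.
have h1 : req u (winv p ++ p ++ u).
  by rewrite catA; apply: req_sym; apply: (req_catr u (req_winvl p)).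
have h2 : req (winv p ++ p ++ v) v.
  by rewrite catA; apply: (req_catr v (req_winvl p)).
exact: req_trans h1 (req_trans (req_catl _ h) h2).
Qed.
Lemma req_cancelr s u v : req (u ++ s) (v ++ s) -> req u v.
Proof.
move=> h.
have h1 : req u ((u ++ s) ++ winv s).
  by rewrite -catA; apply: req_sym; have := req_catl u (req_winvr s); rewrite cats0.
have h2 : req ((v ++ s) ++ winv s) v.
  by rewrite -catA; have := req_catl v (req_winvr s); rewrite cats0.
exact: req_trans h1 (req_trans (req_catr _ h) h2).
Qed.

Definition cl (x y : letter) := e x.1 y.1 || (x.1 == y.1).

Lemma req_swap x y : cl x y -> req [:: x; y] [:: y; x].
Proof.
case/orP=> h.
  case: x y h => a s [b t] /= h; apply: req_step.
  by have := step_comm [::] [::] s t h.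
case: x y h => a s [b t] /= /eqP <-.
case: (eqVneq s t) => [->|hst]; first exact: req_refl.
have ht : t = ~~ s by case: s t hst => [] [].
rewrite ht; apply: req_trans (req_free (a, s)) _.
by apply: req_sym; have := req_free' (a, s).
Qed.

Lemma req_comm1 x q : (forall y, y \in q -> cl x y) -> req (x :: q) (q ++ [:: x]).
Proof.
elim: q => [|y q ih] h /=; first exact: req_refl.
apply: req_trans (_ : req ([:: x; y] ++ q) ([:: y; x] ++ q)) _.
  by apply: req_catr; apply: req_swap; apply: h; rewrite inE eqxx.
apply: (req_catl [:: y]); apply: ih => z hz; apply: h; rewrite inE hz orbT //.

Qed.

Lemma req_comm p q : (forall x y, x \in p -> y \in q -> cl x y) -> req (p ++ q) (q ++ p).
Proof.
elim: p => [|x p ih] h /=; first by rewrite cats0; exact: req_refl.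
have h1 : req (x :: (p ++ q)) (x :: (q ++ p)).
  by apply: req_cons; apply: ih => a b ha hb; apply: h; rewrite ?inE ?ha ?orbT.
have h2 : req ((x :: q) ++ p) ((q ++ [:: x]) ++ p).
  by apply: req_catr; apply: req_comm1 => y hy; apply: h; rewrite ?inE ?eqxx.
by rewrite -catA /= in h2; exact: req_trans h1 h2.
Qed.

Fixpoint cancel (x : letter) (st : word) : option word :=
  if st is y :: st' then
    if y == linv x then Some st'
    else if e x.1 y.1 then omap (cons y) (cancel x st') else None
  else None.
Definition act (st : word) (x : letter) : word :=
  if cancel x st is Some st' then st' else x :: st.
Definition E (w : word) : word := foldl act [::] w.

Definition comx (x : letter) := fun y : letter => e x.1 y.1.

Inductive sw : word -> word -> Prop :=
  sw_intro p q (a b : letter) : e a.1 b.1 -> sw (p ++ a :: b :: q) (p ++ b :: a :: q).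
Definition seqv := clos_refl_sym_trans word sw.

Lemma seqv_refl u : seqv u u. Proof. exact: rst_refl. Qed.
Lemma seqv_sym u v : seqv u v -> seqv v u. Proof. exact: rst_sym. Qed.
Lemma seqv_trans u v w : seqv u v -> seqv v w -> seqv u w. Proof. exact: rst_trans. Qed.
Lemma sw_seqv u v : sw u v -> seqv u v. Proof. exact: rst_step. Qed.

Lemma sw_cons z u v : sw u v -> sw (z :: u) (z :: v).
Proof. by case=> p q a b h; apply: (sw_intro (z :: p)). Qed.
Lemma seqv_cons z u v : seqv u v -> seqv (z :: u) (z :: v).
Proof.
elim=> [a b h|a|a b _ ih|a b c _ ih1 _ ih2].
- by apply: sw_seqv; apply: sw_cons.
- exact: seqv_refl.
- exact: seqv_sym.
- exact: seqv_trans ih1 ih2.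
Qed.

Lemma neq_linv x y : e x.1 y.1 -> (y == linv x) = false.
Proof. by move=> h; apply/eqP => hy; move: h; rewrite hy /= eirr. Qed.

Lemma seqv_move y m q : all (comx y) m -> seqv (y :: m ++ q) (m ++ y :: q).
Proof.
elim: m => [|z m ih] /=; first by move=> _; exact: seqv_refl.
case/andP=> hz hm.
apply: seqv_trans (_ : seqv (z :: y :: m ++ q) _).
  by apply: sw_seqv; apply: (sw_intro [::]).
by apply: seqv_cons; apply: ih.
Qed.

Lemma cancel_skip x m q : all (comx x) m -> cancel x (m ++ q) = omap (cat m) (cancel x q).
Proof.
elim: m => [|y m ih] /=; first by case: (cancel x q).
case/andP=> hy hm; rewrite /comx in hy; rewrite neq_linv // hy ih //.
by case: (cancel x q).
Qed.

Lemma cancel_decomp x m q : all (comx x) m -> cancel x (m ++ linv x :: q) = Some (m ++ q).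
Proof. by move=> h; rewrite cancel_skip //= eqxx. Qed.

Lemma cancel_Some x st r : cancel x st = Some r ->
  exists m q, [/\ st = m ++ linv x :: q, all (comx x) m & r = m ++ q].
Proof.
elim: st r => [|y st ih] r //=.
case: eqP => [-> [<-]|_]; first by exists [::], st.
case: ifP => // hy.
case hc: (cancel x st) => [r'|] //= [<-].
have [m [q [-> hm ->]]] := ih _ hc.
by exists (y :: m), q; split => //; rewrite /= hm andbT; exact: hy.
Qed.

Lemma cancel_cons_comm x y st : e x.1 y.1 -> cancel x (y :: st) = omap (cons y) (cancel x st).
Proof. by move=> h /=; rewrite neq_linv // h. Qed.


Lemma cancel_sw x st st' : sw st st' ->
  (cancel x st = None /\ cancel x st' = None) \/
  exists r r', [/\ cancel x st = Some r, cancel x st' = Some r' & seqv r r'].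
Proof.
case=> p q a b hab.
elim: p => [|z p ih] /=.
- case: (eqVneq a (linv x)) => [ha|ha].
    have hb : (b == linv x) = false.
      by apply/eqP => hb; move: hab; rewrite ha hb /= eirr.
    have hxb : e x.1 b.1 by move: hab; rewrite ha.
    right; exists (b :: q), (b :: q); rewrite ha /= hb hxb.
    by split => //; exact: seqv_refl.
  case: (eqVneq b (linv x)) => [hb|hb].
    have hxa : e x.1 a.1 by move: hab; rewrite hb /= esym.
    right; exists (a :: q), (a :: q); rewrite hxa.
    by split => //; exact: seqv_refl.
  rewrite ?(negbTE ha) ?(negbTE hb).
  case hxa: (e x.1 a.1); case hxb: (e x.1 b.1) => /=; try by left.
  case: (cancel x q) => [r|] /=; last by left.
  right; exists (a :: b :: r), (b :: a :: r); split => //.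
  by apply: sw_seqv; apply: (sw_intro [::]).
- case: eqP => [_|_].
    right; exists (p ++ a :: b :: q), (p ++ b :: a :: q); split => //.
    by apply: sw_seqv; apply: sw_intro.
  case: ifP => _; last by left.
  case: ih => [[-> ->]|[r [r' [-> -> h]]]] /=; first by left.
  by right; exists (z :: r), (z :: r'); split => //; apply: seqv_cons.
Qed.

Lemma act_sw x st st' : sw st st' -> seqv (act st x) (act st' x).
Proof.
move=> h; rewrite /act.
case: (cancel_sw x h) => [[-> ->]|[r [r' [-> -> h']]]] //.
by apply: sw_seqv; apply: sw_cons.
Qed.

Lemma act_seqv x st st' : seqv st st' -> seqv (act st x) (act st' x).
Proof.
elim=> [a b h|a|a b _ ih|a b c _ ih1 _ ih2].
- exact: act_sw.
- exact: seqv_refl.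
- exact: seqv_sym.
- exact: seqv_trans ih1 ih2.
Qed.

Lemma fold_seqv w st st' : seqv st st' -> seqv (foldl act st w) (foldl act st' w).
Proof.
elim: w st st' => [|x w ih] st st' h //=.
by apply: ih; apply: act_seqv.
Qed.

Lemma cancel_CC x y st s1 s2 : e x.1 y.1 -> cancel y st = Some s1 -> cancel x st = Some s2 ->
  exists s, cancel x s1 = Some s /\ cancel y s2 = Some s.
Proof.
move=> hxy; elim: st s1 s2 => [|z st ih] s1 s2 //=.
have hyx : e y.1 x.1 by rewrite esym.
case: (eqVneq z (linv y)) => [hz|hz].
  move=> [<-]; rewrite hz /= neq_linv //= hxy.
  case hc: (cancel x st) => [s|] //= [<-].
  by exists s; split => //=; rewrite ?eqxx.
case: (eqVneq z (linv x)) => [hz'|hz'].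
  rewrite hz' /= hyx.
  case hc: (cancel y st) => [s|] //= [<-] [<-].
  by exists s; split => //=; rewrite ?eqxx.
case hyz: (e y.1 z.1) => //; case hc1: (cancel y st) => [t1|] //= [<-].
case hxz: (e x.1 z.1) => //; case hc2: (cancel x st) => [t2|] //= [<-].
have [s [h1 h2]] := ih _ _ hc1 hc2.
by exists (z :: s); rewrite /= (negbTE hz') (negbTE hz) hxz hyz h1 h2.
Qed.

Lemma cancel_CN x y st s1 : e x.1 y.1 -> cancel y st = Some s1 -> cancel x st = None ->
  cancel x s1 = None.
Proof.
move=> hxy; elim: st s1 => [|z st ih] s1 //=.
case: (eqVneq z (linv y)) => [hz|hz].
  move=> [<-]; rewrite hz /= neq_linv //= hxy.
  by case: (cancel x st).
case: ifP => // hyz; case hc1: (cancel y st) => [t1|] //= [<-].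
case: (eqVneq z (linv x)) => [//|hz'].
case: ifP => hxz /=.
  case hc2: (cancel x st) => [t2|] //= _.
  by rewrite (negbTE hz') hxz (ih _ hc1 hc2).
by rewrite (negbTE hz') hxz.
Qed.

Lemma act_comm x y st : e x.1 y.1 -> seqv (act (act st y) x) (act (act st x) y).
Proof.
move=> hxy; have hyx : e y.1 x.1 by rewrite esym.
rewrite /act.
case hy: (cancel y st) => [s1|]; case hx: (cancel x st) => [s2|].
- have [s [h1 h2]] := cancel_CC hxy hy hx.
  by rewrite h1 h2; exact: seqv_refl.
- rewrite (cancel_CN hxy hy hx) cancel_cons_comm // hy; exact: seqv_refl.
- rewrite (cancel_CN hyx hx hy) cancel_cons_comm // hx; exact: seqv_refl.
- rewrite !cancel_cons_comm // hx hy /=.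
  by apply: sw_seqv; apply: (sw_intro [::]).
Qed.

Fixpoint red (st : word) : Prop :=
  if st is y :: st' then red st' /\ cancel y st' = None else True.

Lemma red_suffix m s : red (m ++ s) -> red s.
Proof. by elim: m => [|y m ih] //= [h _]; apply: ih. Qed.

Lemma cancel_insert z x m q r : e z.1 x.1 -> cancel z (m ++ q) = Some r ->
  exists r', cancel z (m ++ linv x :: q) = Some r'.
Proof.
move=> hzx; elim: m r => [|y m ih] r /=.
  move=> hc; case: eqP => [_|_]; first by eexists.
  by rewrite hzx hc; eexists.
case: eqP => [_ _|_]; first by eexists.
case: ifP => // _; case hc: (cancel z (m ++ q)) => [t|] //= _.
by have [r' ->] := ih _ hc; eexists.
Qed.

Lemma red_remove x m q : all (comx x) m -> red (m ++ linv x :: q) -> red (m ++ q).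
Proof.
elim: m => [|z m ih] /=; first by move=> _ [].
case/andP=> hz hm [hr hc]; split; first exact: ih.
case hc': (cancel z (m ++ q)) => [t|] //.
have hzx : e z.1 x.1 by rewrite esym.
by have [r' hr'] := cancel_insert hzx hc'; rewrite hr' in hc.
Qed.

Lemma red_act st x : red st -> red (act st x).
Proof.
rewrite /act; case hc: (cancel x st) => [r|] hr //=.
have [m [q [hst hm ->]]] := cancel_Some hc.
by rewrite hst in hr; apply: red_remove hm hr.
Qed.

Lemma act_inv st x : red st -> seqv (act (act st x) (linv x)) st.
Proof.
move=> hr; rewrite /act.
case hc: (cancel x st) => [r|] /=; last by rewrite linvK eqxx; exact: seqv_refl.
have [m [q [hst hm ->]]] := cancel_Some hc.
have hm' : all (comx (linv x)) m by [].
rewrite cancel_skip //.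
rewrite hst in hr; have := red_suffix hr => /= [[_ ->]] /=.
rewrite hst; exact: seqv_move.
Qed.

Lemma E_rcons w x : E (rcons w x) = act (E w) x.
Proof. by rewrite /E foldl_rcons. Qed.

Lemma red_E w : red (E w).
Proof.
elim/last_ind: w => [|w x ih] //; rewrite E_rcons; exact: red_act.
Qed.

Lemma E_resp u v : req u v -> seqv (E u) (E v).
Proof.
elim=> [a b h|a|a b _ ih|a b c _ ih1 _ ih2].
- case: h => [u0 w0 x|u0 w0 a0 b0 s0 t0 hab]; rewrite /E !foldl_cat /=.
    by apply: fold_seqv; apply: act_inv; apply: red_E.
  by apply: fold_seqv; apply: act_comm => /=; rewrite esym.
- exact: seqv_refl.
- exact: seqv_sym.
- exact: seqv_trans ih1 ih2.
Qed.

Lemma seqv_req u v : seqv u v -> req (rev u) (rev v).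
Proof.
elim=> [a b h|a|a b _ ih|a b c _ ih1 _ ih2].
- case: h => p q x y hxy; rewrite !rev_cat !rev_cons -!cats1 -!catA /=.
  case: x y hxy => a0 s0 [b0 t0] /= hxy.
  by apply: req_step; apply: step_comm; rewrite esym.
- exact: req_refl.
- exact: req_sym.
- exact: req_trans ih1 ih2.
Qed.

Lemma req_move_end y m : all (comx y) m -> req (m ++ [:: y]) (y :: m).
Proof.
move=> h; apply: req_sym; apply: req_comm1 => z hz; apply/orP; left.
by move/allP: h => /(_ z hz).
Qed.

Lemma rev_act st x : req (rev (act st x)) (rcons (rev st) x).
Proof.
rewrite /act; case hc: (cancel x st) => [r|]; last by rewrite rev_cons; exact: req_refl.
have [m [q [-> hm ->]]] := cancel_Some hc.
rewrite !rev_cat rev_cons -!cats1 -!catA.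
apply: req_catl.
have h1 : req (rev m ++ [:: x]) (x :: rev m).
  by apply: req_move_end; rewrite all_rev.
have h2 := req_catl [:: linv x] h1.
apply: req_sym; apply: req_trans h2 _.
exact: (req_catr (rev m) (req_free' x)).
Qed.

Lemma E_rev w : req (rev (E w)) w.
Proof.
elim/last_ind: w => [|w x ih]; first exact: req_refl.
rewrite E_rcons; apply: req_trans (rev_act _ _) _.
rewrite -!cats1; exact: req_catr.
Qed.

Lemma red_E_rev r : red r -> E (rev r) = r.
Proof.
elim: r => [|y r ih] //= [hr hc].
by rewrite rev_cons E_rcons ih // /act hc.
Qed.


Lemma cancel_rcons y s x r : cancel y (rcons s x) = Some r -> cancel y s = None ->
  x = linv y /\ all (comx y) s.
Proof.
elim: s r => [|z s ih] r /=.
  case: eqP => [-> _ _|_]; first by [].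
  by case: ifP.
case: eqP => // _; case: ifP => // hz.
case hc: (cancel y (rcons s x)) => [t|] //= _.
case hc': (cancel y s) => [t'|] //= _.
have [-> ha] := ih _ hc hc'.
by split => //; rewrite ha andbT; exact: hz.
Qed.

Lemma red_rcons r x : red r ->
  red (rcons r x) \/ exists p m, r = p ++ linv x :: m /\ all (comx x) m.
Proof.
elim: r => [|y r ih] /=; first by left.
case=> hr hc; case: (ih hr) => [hr'|[p [m [-> hm]]]].
  case hc': (cancel y (rcons r x)) => [t|]; last by left.
  have [hx hall] := cancel_rcons hc' hc.
  right; exists [::], r; split; first by rewrite hx linvK.
  by rewrite hx.
by right; exists (y :: p), m.
Qed.

Lemma cancel_insert2 z x p m r : all (comx x) m -> cancel z (p ++ m) = Some r ->
  exists r', cancel z (p ++ linv x :: m) = Some r'.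
Proof.
move=> hm; elim: p r => [|y p ih] r /=.
  move=> hc; have [k [s [hmk _ _]]] := cancel_Some hc.
  have hin : linv z \in m by rewrite hmk mem_cat inE eqxx orbT.
  have hxz : e z.1 x.1 by rewrite esym; exact: (allP hm _ hin).
  exact: (cancel_insert (m := [::]) hxz hc).
case: eqP => [_ _|_]; first by eexists.
case: ifP => // _; case hc: (cancel z (p ++ m)) => [t|] //= _.
by have [r' ->] := ih _ hc; eexists.
Qed.

Lemma red_remove_below p x m : all (comx x) m -> red (p ++ linv x :: m) -> red (p ++ m).
Proof.
move=> hm; elim: p => [|z p ih] /=; first by case.
case=> hr hc; split; first exact: ih.
case hc': (cancel z (p ++ m)) => [t|] //.
by have [r' hr'] := cancel_insert2 hm hc'; rewrite hr' in hc.
Qed.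

Lemma seqv_size u v : seqv u v -> size u = size v.
Proof.
elim=> [a b h|a|a b _ ih|a b c _ ih1 _ ih2] //; last by rewrite ih1.
by case: h => p q x y _; rewrite !size_cat.
Qed.

Lemma seqv_proj (P : pred letter) u v :
  (forall a b : letter, e a.1 b.1 -> ~~ (P a && P b)) -> seqv u v -> filter P u = filter P v.
Proof.
move=> hP; elim=> [a b h|a|a b _ ih|a b c _ ih1 _ ih2] //; last by rewrite ih1.
case: h => p q x y hxy; rewrite !filter_cat /=.
have := hP _ _ hxy.
by case: (P x); case: (P y).
Qed.

Lemma cons_rcons_eq (c : letter) l : c :: l = rcons l c -> forall y, y \in l -> y = c.
Proof.
elim: l => [|a l ih] //= [ha hl] y; rewrite inE => /orP[/eqP ->|hy]; first by rewrite ha.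
by move: hl; rewrite -ha => hl; exact: ih hl y hy.
Qed.

Lemma Zcore (u w : T) (z : word) : u != w -> ~~ e u w ->
  req (z ++ [:: (u, false)]) ((u, false) :: z) -> forall y, y \in E z -> y.1 != w.
Proof.
move=> huw heuw hc.
set x : letter := (u, false).
set r := E z.
have hr : red r by apply: red_E.
have hzr : req z (rev r) by apply: req_sym; apply: E_rev.
have h1 : seqv (act r x) (E (rev (rcons r x))).
  have -> : act r x = E (z ++ [:: x]) by rewrite cats1 E_rcons.
  apply: E_resp => //.
  apply: req_trans hc _; rewrite rev_rcons; exact: req_cons.
set P : pred letter := fun y => (y.1 == u) || (y.1 == w).
have hP : forall a b : letter, e a.1 b.1 -> ~~ (P a && P b).
  move=> a b hab; rewrite /P; apply/negP => /andP[/orP[/eqP ha|/eqP ha] /orP[/eqP hb|/eqP hb]].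
  - by move: hab; rewrite ha hb eirr.
  - by move: hab heuw; rewrite ha hb => ->.
  - by move: hab heuw; rewrite ha hb esym => ->.
  - by move: hab; rewrite ha hb eirr.
have hPc : forall m, all (comx x) m -> filter P m = [::].
  move=> m; elim: m => [|y m ih] //= /andP[hy hm]; rewrite ih //.
  have hy' : e u y.1 := hy.
  have -> : P y = false.
    rewrite /P; apply/negbTE/negP => /orP[/eqP hu|/eqP hw].
      by move: hy'; rewrite hu eirr.
    by move: hy' heuw; rewrite hw => ->.
  by [].
have hPx : P x by rewrite /P eqxx.
have hPlx : P (linv x) by rewrite /P eqxx.
have key : exists c : letter, c.1 = u /\ forall y, y \in filter P r -> y = c.
  case: (red_rcons x hr) => [hr2|[p [m [hpm hm]]]].
    rewrite red_E_rev // in h1.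
    move: h1; rewrite /act; case hcx: (cancel x r) => [s1|] h1.
      have [m1 [q1 [hq _ hs]]] := cancel_Some hcx.
      move: (seqv_size h1); rewrite hs size_rcons hq !size_cat /=; lia.
    exists x; split => //; apply: cons_rcons_eq.
    by have := seqv_proj hP h1; rewrite filter_rcons /= hPx.
  have h2 : req (rev (rcons r x)) (rev (p ++ m)).
    rewrite rev_rcons hpm !rev_cat rev_cons -cats1 -catA.
    have hmv : req (x :: rev m) (rev m ++ [:: x]).
      by apply: req_comm1 => y hy; apply/orP; left; apply: (allP hm); rewrite -mem_rev.
    have := req_catr ([:: linv x] ++ rev p) hmv; rewrite -catA /= => h3.
    apply: req_trans h3 _.
    exact: (req_catl (rev m) (req_catr (rev p) (req_free x))).
  have h3 : seqv (act r x) (p ++ m).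
    apply: seqv_trans h1 _.
    have -> : p ++ m = E (rev (p ++ m)).
      by rewrite red_E_rev //; apply: red_remove_below hm _; rewrite -hpm.
    exact: E_resp.
  move: h3; rewrite /act; case hcx: (cancel x r) => [s1|] h3; last first.
    move: (seqv_size h3); rewrite /= hpm !size_cat /=; lia.
  have [m1 [q1 [hq hm1 hs]]] := cancel_Some hcx.
  rewrite hs in h3.
  exists (linv x); split => //.
  have e1 := seqv_proj hP h3; rewrite !filter_cat (hPc _ hm) (hPc _ hm1) cats0 /= in e1.
  have e2 : filter P r = linv x :: filter P q1 by rewrite hq filter_cat (hPc _ hm1) /= hPlx.
  have e3 : filter P r = rcons (filter P p) (linv x).
    by rewrite hpm filter_cat /= hPlx (hPc _ hm) cats1.
  move=> y; rewrite e2 inE => /orP[/eqP -> //|hy].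
  apply: (cons_rcons_eq (l := filter P q1)) => //.
  by rewrite -e2 e3 e1.
case: key => c [hcu hc'] y hy; apply/negP => /eqP hyw.
have : y \in filter P r by rewrite mem_filter hy /P hyw eqxx orbT.
move/hc' => hyc; move: huw; rewrite -hyw hyc hcu eqxx //.
Qed.

Definition centralv (t : T) := [forall t', (t' != t) ==> e t t'].

Lemma Zmain (z : word) : (forall t, req (z ++ [:: (t, false)]) ((t, false) :: z)) ->
  forall y, y \in E z -> centralv y.1.
Proof.
move=> hz y hy; apply/forallP => t'; apply/implyP => ht.
apply/negPn/negP => hne.
have hne' : ~~ e t' y.1 by rewrite esym.
by move: (Zcore ht hne' (hz t') hy); rewrite eqxx.
Qed.


Local Open Scope ring_scope.

Definition sgn (x : letter) : int := if x.2 then -1 else 1.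
Definition cab (t : T) (x : letter) : int := if x.1 == t then sgn x else 0.
Fixpoint abv (t : T) (w : word) : int :=
  if w is x :: w' then cab t x + abv t w' else 0.

Lemma abv_cat t u v : abv t (u ++ v) = abv t u + abv t v.
Proof. elim: u => [|x u ih] /=; first by rewrite add0r. by rewrite ih addrA. Qed.

Lemma cab_linv t x : cab t (linv x) = - cab t x.
Proof. by case: x => a [] ; rewrite /cab /linv /sgn /=; case: (a == t); rewrite ?oppr0 ?opprK. Qed.

Lemma abv_req t u v : req u v -> abv t u = abv t v.
Proof.
elim=> [a b h|a|a b _ ih|a b c _ ih1 _ ih2] //; last by rewrite ih1.
case: h => [u0 w0 x|u0 w0 a0 b0 s0 t0 hab]; rewrite !abv_cat /=.
  by rewrite cab_linv addr0 addrN add0r.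
by rewrite !addr0 (addrC (cab t (a0, s0))).
Qed.

Lemma abv_winv t w : abv t (winv w) = - abv t w.
Proof.
elim: w => [|x w ih] /=; first by rewrite oppr0.
by rewrite winv_cons -cats1 abv_cat ih /= cab_linv addr0 opprD addrC.
Qed.

Lemma abv_nomem t w : (forall y, y \in w -> y.1 != t) -> abv t w = 0.
Proof.
elim: w => [|x w ih] //= h.
rewrite ih ?addr0; last by move=> y hy; apply: h; rewrite inE hy orbT.
by rewrite /cab (negbTE (h x _)) // inE eqxx.
Qed.

Definition gen (v : T) : word := [:: (v, false)].

Definition pw (v : T) (k : int) : word :=
  match k with Posz n => nseq n (v, false) | Negz n => nseq n.+1 (v, true) end.

Lemma abv_nseq t x n : abv t (nseq n x) = cab t x *+ n.
Proof. by elim: n => [|n ih] //=; rewrite ih mulrS. Qed.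

Lemma abv_pw t v k : abv t (pw v k) = if v == t then k else 0.
Proof.
case: k => n /=; rewrite abv_nseq /cab /sgn /=; case: (v == t); rewrite ?mul0rn //.
  by rewrite natz.
rewrite mulNrn natz NegzE; lia.
Qed.

Lemma pw_mem v k y : y \in pw v k -> y.1 = v.
Proof. by case: k => n; rewrite /pw mem_nseq => /andP[_ /eqP ->]. Qed.

Lemma pw_cons_f v k : req ((v, false) :: pw v k) (pw v (1 + k)).
Proof.
case: k => [n|[|n]].
- have -> : (1 + Posz n = Posz n.+1)%R by lia.
  exact: req_refl.
- have -> : (1 + Negz 0 = Posz 0)%R by lia.
  exact: (req_free (v, false)).
- have -> : (1 + Negz n.+1 = Negz n)%R by lia.
  by have := req_catr (nseq n.+1 (v, true)) (req_free (v, false)).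
Qed.

Lemma pw_cons_t v k : req ((v, true) :: pw v k) (pw v (-1 + k)).
Proof.
case: k => [[|n]|n].
- have -> : (-1 + Posz 0 = Negz 0)%R by lia.
  exact: req_refl.
- have -> : (-1 + Posz n.+1 = Posz n)%R by lia.
  by have := req_catr (nseq n (v, false)) (req_free' (v, false)).
- have -> : (-1 + Negz n = Negz n.+1)%R by lia.
  exact: req_refl.
Qed.

Lemma pw_cons v b k : req ((v, b) :: pw v k) (pw v (sgn (v, b) + k)).
Proof. by case: b; [apply: pw_cons_t | apply: pw_cons_f]. Qed.

Lemma single c v : (forall y, y \in c -> y.1 = v) -> req c (pw v (abv v c)).
Proof.
elim: c => [|x c ih] h /=; first exact: req_refl.
have hx : x.1 = v by apply: h; rewrite inE eqxx.
have ih' : req c (pw v (abv v c)) by apply: ih => y hy; apply: h; rewrite inE hy orbT.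
case: x hx h => a b /= -> h.
apply: req_trans (req_cons _ ih') _.
by rewrite /cab /= eqxx; apply: pw_cons.
Qed.

Lemma abv_filter_eq s t c :
  abv s (filter (fun y : letter => y.1 == t) c) = if t == s then abv s c else 0.
Proof.
elim: c => [|x c ih] /=; first by case: (t == s).
case: (eqVneq x.1 t) => [hx|hx] /=; rewrite ih.
  by case: (eqVneq t s) => [<-|hts] //; rewrite /cab hx (negbTE hts) add0r.
by case: (eqVneq t s) => [hts|hts] //; rewrite /cab -hts (negbTE hx) add0r.
Qed.

Lemma abv_filter_neq s t c :
  abv s (filter (fun y : letter => y.1 != t) c) = if t == s then 0 else abv s c.
Proof.
elim: c => [|x c ih] /=; first by case: (t == s).
case: (eqVneq x.1 t) => [hx|hx] /=; rewrite ih.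
  by case: (eqVneq t s) => [hts|hts] //; rewrite /cab hx (negbTE hts) add0r.
by case: (eqVneq t s) => [hts|hts] //; rewrite /cab -hts (negbTE hx) add0r.
Qed.

Lemma split_vertex t c : (forall y, y \in c -> y.1 != t -> e y.1 t) ->
  req c (filter (fun y : letter => y.1 == t) c ++ filter (fun y : letter => y.1 != t) c).
Proof.
elim: c => [|x c ih] h /=; first exact: req_refl.
have ih' := ih (fun y hy => h y ltac:(by rewrite inE hy orbT)).
case: (eqVneq x.1 t) => [hx|hx] /=; first exact: req_cons.
apply: req_trans (req_cons x ih') _.
set F := filter _ c; set G := filter _ c.
have hxt : e x.1 t by apply: h; rewrite ?inE ?eqxx.
have h1 : req (x :: F) (F ++ [:: x]).
  apply: req_comm1 => y; rewrite mem_filter => /andP[/eqP hy _].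
  by rewrite /cl hy hxt.
have := req_catr G h1; rewrite -catA /=; exact.
Qed.

Lemma lemmaA_aux n c : (size c < n)%N -> (forall y, y \in c -> centralv y.1) ->
  (forall t, abv t c = 0) -> req c [::].
Proof.
elim: n c => [|n ih] [|x c] hs hc ha; rewrite ?ltn0 // ; first exact: req_refl.
set t := x.1.
have hsplit : req (x :: c) (filter (fun y : letter => y.1 == t) (x :: c) ++
                            filter (fun y : letter => y.1 != t) (x :: c)).
  apply: split_vertex => y hy hyt.
  have := hc y hy => /forallP /(_ t); rewrite eq_sym hyt /=; exact.
apply: req_trans hsplit _.
have hF : req (filter (fun y : letter => y.1 == t) (x :: c)) [::].
  have := single (c := filter (fun y : letter => y.1 == t) (x :: c)) (v := t).
  rewrite abv_filter_eq eqxx ha; apply.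
  by move=> y; rewrite mem_filter => /andP[/eqP ? _].
have hG : req (filter (fun y : letter => y.1 != t) (x :: c)) [::].
  rewrite /= eqxx /=.
  apply: ih.
  - by rewrite size_filter (leq_ltn_trans (count_size _ _)).
  - by move=> y; rewrite mem_filter => /andP[_ hy]; apply: hc; rewrite inE hy orbT.
  - move=> s; have := abv_filter_neq s t (x :: c).
    have -> : [seq y <- x :: c | y.1 != t] = [seq y <- c | y.1 != t] by rewrite /= /t eqxx.
    by rewrite ha; case: (t == s).
exact: (req_cat hF hG).
Qed.

Lemma lemmaA c : (forall y, y \in c -> centralv y.1) -> (forall t, abv t c = 0) -> req c [::].
Proof. exact: (lemmaA_aux (ltnSn (size c))). Qed.

Definition subst (h : letter -> word) (w : word) : word := flatten (map h w).
Lemma subst_cat h u v : subst h (u ++ v) = subst h u ++ subst h v.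
Proof. by rewrite /subst map_cat flatten_cat. Qed.
Lemma subst_cons h x w : subst h (x :: w) = h x ++ subst h w. Proof. by []. Qed.
Lemma subst1 h x : subst h [:: x] = h x. Proof. by rewrite subst_cons cats0. Qed.
Lemma subst2 h x y : subst h [:: x; y] = h x ++ h y. Proof. by rewrite /subst /= cats0. Qed.

Definition hcond (h : letter -> word) :=
  (forall x, req (h x ++ h (linv x)) [::]) /\
  (forall a b s t, e a b -> req (h (a, s) ++ h (b, t)) (h (b, t) ++ h (a, s))).

Lemma subst_endo h : hcond h -> raag_endo e (subst h).
Proof.
case=> h1 h2; split; last by move=> u v; rewrite /wmul subst_cat; exact: req_refl.
move=> u v; elim=> [a b st|a|a b _ ih|a b c _ ih1 _ ih2].
- case: st => [u0 w0 x|u0 w0 a0 b0 s0 t0 hab]; rewrite !subst_cat !subst2.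
    exact: req_ctx _ _ (h1 x).
  exact: req_ctx _ _ (h2 _ _ _ _ hab).
- exact: req_refl.
- exact: req_sym.
- exact: req_trans ih1 ih2.
Qed.

Lemma subst_comp h h' : (forall x, req (subst h' (h x)) [:: x]) ->
  forall w, req (subst h' (subst h w)) w.
Proof.
move=> hh; elim=> [|x w ih]; first exact: req_refl.
rewrite subst_cons subst_cat; exact: (req_cat (hh x) ih).
Qed.

Lemma subst_aut h h' : hcond h -> hcond h' -> (forall x, req (subst h' (h x)) [:: x]) ->
  (forall x, req (subst h (h' x)) [:: x]) -> raag_aut e (subst h).
Proof.
move=> c1 c2 i1 i2; split; first exact: subst_endo.
exists (subst h'); split; first exact: subst_endo.
by split; apply: subst_comp.
Qed.

Definition iimg (t : T) (y : letter) : letter := if y.1 == t then linv y else y.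
Definition iota (t : T) := subst (fun y => [:: iimg t y]).

Lemma iimg_linv t x : iimg t (linv x) = linv (iimg t x).
Proof. by rewrite /iimg /=; case: ifP. Qed.
Lemma iimg_fst t x : (iimg t x).1 = x.1.
Proof. by rewrite /iimg; case: ifP. Qed.
Lemma iimgK t x : iimg t (iimg t x) = x.
Proof. by rewrite {1}/iimg iimg_fst /iimg; case: (x.1 == t); rewrite ?linvK. Qed.

Lemma iota_hcond t : hcond (fun y => [:: iimg t y]).
Proof.
split=> [x|a b s u hab] /=; first by rewrite iimg_linv; exact: req_free.
by apply: req_swap; rewrite /cl !iimg_fst /= hab.
Qed.

Lemma iota_aut t : raag_aut e (iota t).
Proof.
apply: subst_aut; try exact: iota_hcond.
- by move=> x; rewrite subst1 iimgK; exact: req_refl.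
- by move=> x; rewrite subst1 iimgK; exact: req_refl.
Qed.

Lemma abv_iota t w : abv t (iota t w) = - abv t w.
Proof.
elim: w => [|x w ih]; first by rewrite /= oppr0.
rewrite /iota subst_cons -/(iota t w) /= ih opprD; congr (_ + _).
rewrite /iimg; case: (eqVneq x.1 t) => [hx|hx]; first by rewrite cab_linv.
by rewrite /cab (negbTE hx) oppr0.
Qed.

Lemma iota_gen t v : t != v -> iota t (gen v) = gen v.
Proof. by move=> h; rewrite /iota /gen subst1 /iimg /= eq_sym (negbTE h). Qed.

Definition timg (a b : T) (s : bool) (y : letter) : word :=
  if y.1 == a then (if y.2 then [:: (b, ~~ s); y] else [:: y; (b, s)]) else [:: y].

Lemma cl_central b z (s : bool) : centralv b -> cl (b, s) z && cl z (b, s).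
Proof.
move=> /forallP /(_ z.1) hb; rewrite /cl /=.
case: (eqVneq z.1 b) => [->|hzb]; first by rewrite ?eqxx ?orbT.
have h : e b z.1 by move: hb; rewrite hzb.
by rewrite h esym h.
Qed.

Lemma timg_mem a b s y z : z \in timg a b s y -> (z = y) \/ (exists s', z = (b, s')).
Proof.
rewrite /timg; case: ifP => _; last by rewrite inE => /eqP ->; left.
case: y.2; rewrite !inE => /orP[/eqP ->|/eqP ->]; by [left | right; eexists].
Qed.

Lemma timg_hcond a b s : a != b -> centralv b -> hcond (timg a b s).
Proof.
move=> hab hb; split.
  case=> c d; rewrite /timg /=; case: (c == a); last exact: req_free.
  case: d => /=.
    have h1 := req_ctx [:: (b, ~~ s)] [:: (b, s)] (req_free (c, true)).
    apply: req_trans h1 _ => /=.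
    by have := req_free (b, ~~ s); rewrite /linv /= negbK.
  have h1 := req_ctx [:: (c, false)] [:: (c, true)] (req_free (b, s)).
  apply: req_trans h1 _ => /=.
  exact: (req_free (c, false)).
move=> c d s1 t1 hcd; apply: req_comm => x y hx hy.
have [->|[s' ->]] := timg_mem hx; last by case/andP: (cl_central y s' hb).
have [->|[s'' ->]] := timg_mem hy; last by case/andP: (cl_central (c, s1) s'' hb).
by rewrite /cl /= hcd.
Qed.

Lemma timg_inv a b s y : a != b -> req (subst (timg a b (~~ s)) (timg a b s y)) [:: y].
Proof.
move=> hab; case: y => c d; rewrite /timg /=.
have hba : (b == a) = false by apply/negbTE; rewrite eq_sym.
case: (eqVneq c a) => [->|hca] /=; last first.
  by rewrite subst1 /timg /= (negbTE hca); exact: req_refl.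
case: d; rewrite subst2 /timg /= eqxx hba /=.
  exact: (req_catr [:: (a, true)] (req_free (b, ~~ s))).
have := req_catl [:: (a, false)] (req_free (b, ~~ s)); rewrite /linv /= negbK; exact.
Qed.

Definition tau a b := subst (timg a b false).

Lemma tau_aut a b : a != b -> centralv b -> raag_aut e (tau a b).
Proof.
move=> hab hb; apply: (subst_aut (h' := timg a b true)); try exact: timg_hcond.
- by move=> x; exact: (timg_inv false x hab).
- by move=> x; have := timg_inv true x hab; rewrite /=.
Qed.

Lemma abv_tau a b w : a != b -> abv b (tau a b w) = abv b w + abv a w.
Proof.
move=> hab; elim: w => [|[c d] w ih] /=; first by rewrite addr0.
rewrite /tau subst_cons abv_cat -/(tau a b w) ih.
rewrite /timg /=; case: (eqVneq c a) => [->|hca] /=.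
  case: d; rewrite /= /cab /sgn /= ?eqxx (negbTE hab) /=; lia.
rewrite /cab /= (negbTE hca); lia.
Qed.

Lemma tau_gen a b : tau a b (gen a) = [:: (a, false); (b, false)].
Proof. by rewrite /tau /gen subst1 /timg /= eqxx. Qed.

Definition inn (g : word) (w : word) : word := g ++ w ++ winv g.

Lemma inn_inv g w : req (inn (winv g) (inn g w)) w.
Proof.
rewrite /inn winvK -!catA.
have h1 := req_ctx [::] (w ++ winv g ++ g) (req_winvl g).
rewrite /= -catA in h1; apply: req_trans h1 _.
by have := req_catl w (req_winvl g); rewrite cats0.
Qed.

Lemma inn_aut g : raag_aut e (inn g).
Proof.
have hend : forall g, raag_endo e (inn g).
  move=> g'; split; first by move=> u v h; exact: req_ctx.
  move=> u v; rewrite /wmul /inn.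
  have := req_ctx (g' ++ u) (v ++ winv g') (req_winvl g'); rewrite -!catA /= => h.
  exact: req_sym h.
split; first exact: hend.
exists (inn (winv g)); split; first exact: hend.
split=> w; first exact: inn_inv.
by have := inn_inv (winv g) w; rewrite winvK.
Qed.

Lemma req_winv u v : req u v -> req (winv u) (winv v).
Proof.
move=> h.
have h1 : req (winv u) (winv u ++ v ++ winv v).
  by have := req_catl (winv u) (req_sym (req_winvr v)); rewrite cats0.
have h2 : req (winv u ++ v ++ winv v) (winv u ++ u ++ winv v).
  exact: req_catl _ (req_catr _ (req_sym h)).
have h3 : req (winv u ++ u ++ winv v) (winv v).
  by rewrite catA; exact: (req_catr _ (req_winvl u)).
exact: req_trans h1 (req_trans h2 h3).
Qed.

Lemma endo_nil f : raag_endo e f -> req (f [::]) [::].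
Proof.
case=> _ hh; have := hh [::] [::]; rewrite /wmul /= => h.
apply: req_sym; apply: (@req_cancelr (f [::])); exact: h.
Qed.

Lemma endo_cons f x w : raag_endo e f -> req (f (x :: w)) (f [:: x] ++ f w).
Proof. by case=> _ hh; exact: (hh [:: x] w). Qed.

Lemma endo_winv f w : raag_endo e f -> req (f (winv w)) (winv (f w)).
Proof.
move=> hf; apply: (@req_cancell (f w)).
apply: req_trans (req_sym (hf.2 w (winv w))) _.
apply: req_trans (hf.1 _ _ (req_winvr w)) _.
apply: req_trans (endo_nil hf) _.
exact: req_sym (req_winvr _).
Qed.

Lemma endo_ext f g : raag_endo e f -> raag_endo e g ->
  (forall v, req (f (gen v)) (g (gen v))) -> forall w, req (f w) (g w).
Proof.
move=> hf hg hv.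
have hl : forall x, req (f [:: x]) (g [:: x]).
  case=> v [] ; last exact: hv.
  have -> : [:: (v, true)] = winv (gen v) by [].
  apply: req_trans (endo_winv _ hf) _.
  apply: req_trans (req_winv (hv v)) _.
  exact: req_sym (endo_winv _ hg).
elim=> [|x w ih]; first exact: req_trans (endo_nil hf) (req_sym (endo_nil hg)).
apply: req_trans (endo_cons _ _ hf) _.
apply: req_trans (req_cat (hl x) ih) _.
exact: req_sym (endo_cons _ _ hg).
Qed.

Lemma id_endo : raag_endo e id.
Proof. by split=> [u v h|u v] //; exact: req_refl. Qed.

Lemma abv_endo_nseq g t x n : raag_endo e g ->
  abv t (g (nseq n x)) = n%:Z * abv t (g [:: x]).
Proof.
move=> hg; elim: n => [|n ih] /=.
  by rewrite (abv_req t (endo_nil hg)) mul0r.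
rewrite (abv_req t (endo_cons _ _ hg)) abv_cat ih intS; ring.
Qed.

Lemma abv_endo_pw g t v m : raag_endo e g ->
  abv t (g (pw v m)) = m * abv t (g (gen v)).
Proof.
move=> hg; case: m => n; rewrite /pw; first exact: abv_endo_nseq.
rewrite abv_endo_nseq //.
have -> : [:: (v, true)] = winv (gen v) by [].
rewrite (abv_req t (endo_winv _ hg)) abv_winv NegzE; ring.
Qed.

Lemma C1 f (hf : aut_central e f) h y : req (winv h ++ f h ++ y) (y ++ winv h ++ f h).
Proof.
case: hf => [[hfe [g [hge [hgf hfg]]]] hc].
have k : req (f (inn h (g y))) (inn h (f (g y))) := hc (inn h) (inn_aut h) (g y).
have K : req (f h ++ y ++ winv (f h)) (h ++ y ++ winv h).
  have l1 : req (f (inn h (g y))) (f h ++ y ++ winv (f h)).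
    apply: req_trans (hfe.2 h (g y ++ winv h)) _.
    apply: req_catl; apply: req_trans (hfe.2 (g y) (winv h)) _.
    exact: req_cat (hfg y) (endo_winv _ hfe).
  have l2 : req (inn h (f (g y))) (h ++ y ++ winv h) := req_ctx h (winv h) (hfg y).
  exact: req_trans (req_sym l1) (req_trans k l2).
have L : req (winv h ++ f h ++ y) (winv h ++ (f h ++ y ++ winv (f h)) ++ f h).
  rewrite -!catA; have := req_catl (winv h ++ f h ++ y) (req_winvl (f h)).
  by rewrite cats0 -!catA => /req_sym.
have R : req (winv h ++ (h ++ y ++ winv h) ++ f h) (y ++ winv h ++ f h).
  by rewrite -!catA catA; have := req_catr (y ++ winv h ++ f h) (req_winvl h).
exact: req_trans L (req_trans (req_ctx (winv h) (f h) K) R).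
Qed.

Lemma C2 f (hf : aut_central e f) v :
  exists c, (forall y, y \in c -> centralv y.1) /\ req (f (gen v)) (gen v ++ c).
Proof.
set zv := winv (gen v) ++ f (gen v).
have hz : forall t, req (zv ++ [:: (t, false)]) ((t, false) :: zv).
  by move=> t; have := C1 hf (gen v) (gen t); rewrite /zv -!catA.
exists (rev (E zv)); split.
  by move=> y; rewrite mem_rev; exact: Zmain hz y.
apply: req_trans (_ : req _ (gen v ++ zv)) (req_catl (gen v) (req_sym (E_rev zv))).
rewrite /zv catA; exact: req_sym (req_catr (f (gen v)) (req_winvr (gen v))).
Qed.

Lemma C3 f (hf : aut_central e f) v t c : t != v -> req (f (gen v)) (gen v ++ c) -> abv t c = 0.
Proof.
move=> htv hfv; case: hf => [[hfe _] hc].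
have k : req (f (iota t (gen v))) (iota t (f (gen v))) := hc (iota t) (iota_aut t) (gen v).
rewrite iota_gen // in k.
have hi : req (iota t (f (gen v))) (iota t (gen v ++ c)) := (iota_aut t).1.1 _ _ hfv.
rewrite /iota subst_cat -/(iota t (gen v)) -/(iota t c) iota_gen // in hi.
have := abv_req t (req_trans (req_sym hfv) (req_trans k hi)).
rewrite !abv_cat abv_iota => h; lia.
Qed.

Lemma C4 f (hf : aut_central e f) v :
  exists m, req (f (gen v)) (pw v m) /\ (~~ centralv v -> m = 1).
Proof.
have [c [hc hfv]] := C2 hf v.
have h0 : forall t, t != v -> abv t c = 0 := fun t ht => C3 hf ht hfv.
case: (boolP (centralv v)) => hv; last first.
  have hcv : abv v c = 0.
    apply: abv_nomem => y hy; apply/eqP => hyv; move: (hc y hy); rewrite hyv.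
    by apply/negP.
  have hc0 : req c [::].
    apply: lemmaA hc _ => t; case: (eqVneq t v) => [->|ht]; [exact: hcv | exact: h0].
  exists 1; split => //.
  by have := req_catl (gen v) hc0; rewrite cats0 => /(req_trans hfv).
have hs := split_vertex (t := v) (c := c).
have hs' : req c (filter (fun y : letter => y.1 == v) c ++ filter (fun y : letter => y.1 != v) c).
  apply: hs => y hy hyv.
  by have := hc y hy => /forallP /(_ v); rewrite eq_sym hyv.
set F := filter _ c in hs'; set G := filter _ c in hs'.
have hG : req G [::].
  apply: lemmaA.
    by move=> y; rewrite mem_filter => /andP[_ hy]; apply: hc.
  move=> s; rewrite abv_filter_neq; case: (eqVneq v s) => [//|hvs].
  by apply: h0; rewrite eq_sym.
have hF : req F (pw v (abv v F)).
  by apply: single => y; rewrite mem_filter => /andP[/eqP ? _].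
exists (1 + abv v F); split; last by [].
apply: req_trans hfv _; apply: req_trans (req_catl (gen v) hs') _.
apply: req_trans (req_catl (gen v) (req_cat hF hG)) _.
rewrite cats0; exact: pw_cons_f.
Qed.

Lemma C5 f (hf : aut_central e f) v m : req (f (gen v)) (pw v m) -> m = 1 \/ m = -1.
Proof.
move=> hfv; case: hf => [[hfe [g [hge [hgf hfg]]]] _].
have k : req (g (pw v m)) (gen v) := req_trans (hge.1 _ _ (req_sym hfv)) (hgf (gen v)).
have := abv_req v k; rewrite abv_endo_pw // /= /cab /= eqxx /sgn /= addr0 => h.
have : m \is a intUnitRing.unitz by apply: (@intUnitRing.unitzPl _ (abv v (g (gen v)))); rewrite mulrC.
by rewrite qualifE => /orP[/eqP ->|/eqP ->]; [left|right].
Qed.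

Lemma C6 f (hf : aut_central e f) a b ma mb : centralv b -> a != b ->
  req (f (gen a)) (pw a ma) -> req (f (gen b)) (pw b mb) -> ma = mb.
Proof.
move=> hb hab ha hbb; case: hf => [[hfe _] hc].
have k : req (f (tau a b (gen a))) (tau a b (f (gen a))) := hc (tau a b) (tau_aut hab hb) (gen a).
rewrite tau_gen in k.
have l1 : req (f [:: (a, false); (b, false)]) (pw a ma ++ pw b mb).
  apply: req_trans (hfe.2 (gen a) (gen b)) _; exact: req_cat.
have l2 : req (tau a b (f (gen a))) (tau a b (pw a ma)) := (tau_aut hab hb).1.1 _ _ ha.
have := abv_req b (req_trans (req_sym l1) (req_trans k l2)).
rewrite abv_cat abv_tau // !abv_pw !eqxx (negbTE hab); lia.
Qed.

Lemma fix_noncentral f (hf : aut_central e f) : (exists v0, ~~ centralv v0) -> aut_eq e f id.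
Proof.
move=> [v0 hv0]; have hfe := hf.1.1.
apply: (endo_ext hfe id_endo) => v /=.
have [m [hm hm1]] := C4 hf v.
case: (boolP (centralv v)) => hv; last by move: hm; rewrite (hm1 hv).
have [m0 [hm0 hm01]] := C4 hf v0.
have hne : v0 != v by apply/eqP => hh; move: hv0; rewrite hh hv.
have := C6 hf hv hne hm0 hm; rewrite (hm01 hv0) => hm'.
by move: hm; rewrite -hm'.
Qed.

Lemma sign_all f (hf : aut_central e f) : (forall v, centralv v) ->
  exists eps : int, (eps = 1 \/ eps = -1) /\ forall v, req (f (gen v)) (pw v eps).
Proof.
move=> hall; case: (pickP (fun v : T => true)) => [v0 _|hn]; last first.
  by exists 1; split; [left | move=> v; have := hn v].
have [m0 [hm0 _]] := C4 hf v0.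
exists m0; split; first exact: (C5 hf hm0).
move=> v; have [m [hm _]] := C4 hf v.
case: (eqVneq v0 v) => [<- //|hne].
by have := C6 hf (hall v) hne hm0 hm => ->.
Qed.

Lemma free_ab_all : (forall v, centralv v) -> raag_free_abelian e.
Proof.
move=> hall.
exists #|T|, (fun w => [ffun i : 'I_#|T| => abv (enum_val i) w]).
split; [|split; [|split]].
- by move=> u v h; apply/ffunP => i; rewrite !ffunE; exact: abv_req.
- by move=> u v; apply/ffunP => i; rewrite !ffunE /wmul abv_cat.
- move=> u v h.
  have ht : forall t, abv t u = abv t v.
    by move=> t; move/ffunP: h => /(_ (enum_rank t)); rewrite !ffunE enum_rankK.
  have hw : req (u ++ winv v) [::].
    apply: lemmaA => [y _|t]; first exact: hall.
    by rewrite abv_cat abv_winv ht subrr.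
  have h1 : req u ((u ++ winv v) ++ v).
    by rewrite -catA; have := req_catl u (req_winvl v); rewrite cats0 => /req_sym.
  exact: req_trans h1 (req_catr v hw).
- move=> z.
  exists (flatten (map (fun i => pw (enum_val i) (z i)) (enum 'I_#|T|))).
  have key : forall s : seq 'I_#|T|, uniq s -> forall j,
      abv (enum_val j) (flatten (map (fun i => pw (enum_val i) (z i)) s)) =
      if j \in s then z j else 0.
    elim=> [|i s ih] //= /andP[his hs] j.
    rewrite abv_cat abv_pw ih // inE (can_eq enum_valK) eq_sym.
    case: (eqVneq j i) => [->|hji] /=; last by rewrite add0r.
    by rewrite (negbTE his) addr0.
  by apply/ffunP => j; rewrite ffunE key ?enum_uniq // mem_enum.
Qed.

Lemma main_sec :
  (forall f1 f2 f3 : word -> word,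
      aut_central e f1 -> aut_central e f2 -> aut_central e f3 ->
      aut_eq e f1 f2 \/ aut_eq e f1 f3 \/ aut_eq e f2 f3) /\
  (~ raag_free_abelian e ->
      forall f : word -> word, aut_central e f -> aut_eq e f id).
Proof.
split.
  move=> f1 f2 f3 h1 h2 h3.
  case: (boolP [exists v, ~~ centralv v]) => [/existsP hex|hno].
    left => w; apply: req_trans (fix_noncentral h1 hex w) _.
    exact: req_sym (fix_noncentral h2 hex w).
  have hall : forall v, centralv v.
    by move=> v; apply/negPn; move: hno; rewrite negb_exists => /forallP.
  have [e1 [he1 k1]] := sign_all h1 hall.
  have [e2 [he2 k2]] := sign_all h2 hall.
  have [e3 [he3 k3]] := sign_all h3 hall.
  have agree : forall f g (hf : aut_central e f) (hg : aut_central e g) ef eg,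
      ef = eg -> (forall v, req (f (gen v)) (pw v ef)) -> (forall v, req (g (gen v)) (pw v eg)) ->
      aut_eq e f g.
    move=> f g hf hg ef eg heq kf kg.
    apply: (endo_ext hf.1.1 hg.1.1) => v.
    by apply: req_trans (kf v) _; rewrite heq; exact: req_sym (kg v).
  case: he1 => ?; case: he2 => ?; case: he3 => ?; subst.
  all: try first [ by left; exact: (agree _ _ h1 h2 _ _ erefl k1 k2)
             | by right; left; exact: (agree _ _ h1 h3 _ _ erefl k1 k3)
             | by right; right; exact: (agree _ _ h2 h3 _ _ erefl k2 k3) ].
move=> hnf f hf; apply: fix_noncentral hf _.
case: (boolP [exists v, ~~ centralv v]) => [/existsP //|hno].
exfalso; apply: hnf; apply: free_ab_all.
by move=> v; apply/negPn; move: hno; rewrite negb_exists => /forallP.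
Qed.

End RA.

Theorem mainTheorem8 (T : finType) (e : rel T) (hG : simplicial_graph e) :
  (* Z(Aut(A_Gamma)) has at most two elements *)
  (forall f1 f2 f3 : word T -> word T,
      aut_central e f1 -> aut_central e f2 -> aut_central e f3 ->
      aut_eq e f1 f2 \/ aut_eq e f1 f3 \/ aut_eq e f2 f3) /\
  (* if A_Gamma is not free abelian, the centre is trivial *)
  (~ raag_free_abelian e ->
      forall f : word T -> word T, aut_central e f -> aut_eq e f id).
Proof.
case: hG => hs hi; exact: (main_sec hs hi).
Qed.
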